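(* Let $F$ be a non-archimedean local field, $E/F$ a finite field extension, and $V$ a finite-dimensional $E$-vector space. Put $G=\mathrm{Aut}_F(V)$ and $G_E=\mathrm{Aut}_E(V)$. Identify the Bruhat–Tits building $X_E$ of $G_E$ with its image $j(X_E)$ in the building $X_F$ of $G$, where $j$ is the unique $G_E$-equivariant affine map $X_E\to X_F$. If two simplices of $X_E$ are conjugate under the action of $G$, then they are conjugate under the action of $G_E$. *)

(* Defs.v *)
From Stdlib Require Import Rdefinitions Rbasic_fun ZArith.
From HB Require Import structures.
From mathcomp Require Import all_boot all_order all_algebra all_field.
Set Implicit Arguments. Unset Strict Implicit. Unset Printing Implicit Defensive.
Import GRing.Theory.
Local Open Scope ring_scope.

(* A normalized discrete valuation v : F -> Z (its value at 0, i.e. +oo,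
   is encoded by the conditions only being imposed on nonzero elements). *)
Definition is_dval (F : fieldType) (v : F -> Z) : Prop :=
  [/\ (forall x y : F, x != 0 -> y != 0 -> v (x * y)%R = Z.add (v x) (v y)),
      (forall x y : F, x != 0 -> y != 0 -> (x + y)%R != 0 ->
         Z.le (Z.min (v x) (v y)) (v (x + y)%R))
    & (exists pi : F, pi != 0 /\ v pi = Z.one)].

Definition inO (F : fieldType) (v : F -> Z) (x : F) : Prop :=
  x = 0 \/ Z.le Z.zero (v x).

Definition vclose (F : fieldType) (v : F -> Z) (k : Z) (x y : F) : Prop :=
  x = y \/ Z.le k (v (x - y)%R).

Definition vcomplete (F : fieldType) (v : F -> Z) : Prop :=
  forall a : nat -> F,
    (forall k : Z, exists N : nat, forall m n : nat, (N <= m)%N -> (N <= n)%N ->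
        vclose v k (a m) (a n)) ->
    exists l : F, forall k : Z, exists N : nat, forall n : nat, (N <= n)%N ->
        vclose v k (a n) l.

Definition finite_residue (F : fieldType) (v : F -> Z) : Prop :=
  exists s : seq F, (forall r, r \in s -> inO v r) /\
    forall x, inO v x -> exists r, r \in s /\ vclose v Z.one x r.

Definition nonarch_local_field (F : fieldType) (v : F -> Z) : Prop :=
  [/\ is_dval v, vcomplete v & finite_residue v].

(* vE : E -> R is a (real-valued) valuation on E extending v. Over a complete
   F it exists and is unique. *)
Definition extends_val (F : fieldType) (v : F -> Z) (E : fieldExtType F)
    (vE : E -> R) : Prop :=
  [/\ (forall x y : E, x != 0 -> y != 0 -> vE (x * y)%R = Rplus (vE x) (vE y)),
      (forall x y : E, x != 0 -> y != 0 -> (x + y)%R != 0 ->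
         Rle (Rmin (vE x) (vE y)) (vE (x + y)%R))
    & (forall a : F, a != 0 -> vE (a%:A) = IZR (v a))].

(* extended reals R U {+oo}; None = +oo *)
Definition geER (o : option R) (r : R) : Prop :=
  match o with None => True | Some a => Rle r a end.
Definition addER (c : R) (o : option R) : option R := option_map (Rplus c) o.

(* Splittable E-norm on V (Goldman-Iwahori / Bruhat-Tits):
   alpha x = +oo iff x = 0, alpha (x+y) >= min (alpha x) (alpha y),
   alpha (l x) = vE l + alpha x, and there is an E-basis (e_i) with
   alpha (sum c_i e_i) = min_i (vE c_i + alpha e_i). *)
Definition isENorm (F : fieldType) (E : fieldExtType F) (vE : E -> R)
    (V : vectType E) (alpha : V -> option R) : Prop :=
  [/\ (forall x, alpha x = None <-> x = 0),
      (forall x y r, geER (alpha x) r -> geER (alpha y) r -> geER (alpha (x + y)%R) r),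
      (forall (l : E) (x : V), l != 0 -> alpha (l *: x) = addER (vE l) (alpha x))
    & (exists (n : nat) (e : 'I_n -> V),
        (forall x : V, exists! c : {ffun 'I_n -> E}, x = \sum_(i < n) c i *: e i) /\
        (forall (c : {ffun 'I_n -> E}) (r : R),
           geER (alpha (\sum_(i < n) c i *: e i)) r <->
           (forall i, c i = 0 \/ geER (addER (vE (c i)) (alpha (e i))) r)))].

Definition latt (E : fieldType) (V : vectType E) (alpha : V -> option R)
    (L : V -> Prop) : Prop :=
  exists r : R, forall x, L x <-> geER (alpha x) r.

(* The facet (open simplex) of X_E containing [alpha]: the E-norms defining
   the same lattice chain (this set is stable under translation, so it is a
   facet of X_E = {E-norms}/R viewed as a translation-stable set of norms).
   Via j (inclusion of E-norms into F-norms, vE extending v) it is also a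
   subset of X_F. *)
Definition facetE (F : fieldType) (E : fieldExtType F) (vE : E -> R)
    (V : vectType E) (alpha : V -> option R) : (V -> option R) -> Prop :=
  fun gamma => isENorm vE gamma /\ forall L, latt alpha L <-> latt gamma L.

Definition F_aut (F : fieldType) (E : fieldExtType F) (V : vectType E)
    (g : V -> V) : Prop :=
  [/\ (forall x y, g (x + y)%R = (g x + g y)%R),
      (forall (a : F) (x : V), g ((a%:A : E) *: x) = (a%:A : E) *: g x)
    & bijective g].

Definition E_aut (E : fieldType) (V : vectType E) (g : V -> V) : Prop :=
  [/\ (forall x y, g (x + y)%R = (g x + g y)%R),
      (forall (l : E) (x : V), g (l *: x) = l *: g x)
    & bijective g].

(* Main.v *)
Require Import Defs.
From Stdlib Require Import Rdefinitions Rbasic_fun ZArith.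
From Stdlib Require Import RIneq Lra Classical ClassicalEpsilon FunctionalExtensionality PropExtensionality.
From HB Require Import structures.
From mathcomp Require Import all_boot all_order all_algebra all_field.
From mathcomp Require Import zify.
Set Implicit Arguments. Unset Strict Implicit. Unset Printing Implicit Defensive.
Import GRing.Theory.
Local Open Scope ring_scope.

Section Val.
Variables (F : fieldType) (v : F -> Z) (E : fieldExtType F) (vE : E -> R).
Hypothesis hvE : extends_val v vE.

Definition OE (x : E) := x = 0 \/ Rle R0 (vE x).
Definition ME (x : E) := x = 0 \/ Rlt R0 (vE x).

Lemma vM x y : x != 0 -> y != 0 -> vE (x * y) = Rplus (vE x) (vE y).
Proof. by case: hvE => h _ _; apply: h. Qed.

Lemma vU x y : x != 0 -> y != 0 -> x + y != 0 -> Rle (Rmin (vE x) (vE y)) (vE (x + y)).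
Proof. by case: hvE => _ h _; apply: h. Qed.

Lemma vA a : a != 0 -> vE (a%:A) = IZR (v a).
Proof. by case: hvE => _ _ h; apply: h. Qed.

Lemma v1 : vE 1 = R0.
Proof. have := vM (oner_neq0 E) (oner_neq0 E); rewrite mulr1; set a := vE 1 => ?; lra. Qed.

Lemma vN1 : vE (-1) = R0.
Proof.
have h : (-1 : E) != 0 by rewrite oppr_eq0 oner_neq0.
have := vM h h; rewrite mulrNN mulr1 v1 => ?; lra.
Qed.

Lemma vN x : vE (- x) = vE x.
Proof.
have [->|nx] := eqVneq x 0; first by rewrite oppr0.
have h : (-1 : E) != 0 by rewrite oppr_eq0 oner_neq0.
by rewrite -mulN1r vM // vN1 Rplus_0_l.
Qed.

Lemma vV x : x != 0 -> vE (x^-1) = Ropp (vE x).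
Proof.
move=> nx; have h : x^-1 != 0 by rewrite invr_eq0.
have := vM nx h; rewrite mulfV // v1 => ?; lra.
Qed.

Lemma OE0 : OE 0. Proof. by left. Qed.
Lemma ME0 : ME 0. Proof. by left. Qed.
Lemma OE1 : OE 1. Proof. by right; rewrite v1; lra. Qed.
Lemma ME_OE x : ME x -> OE x.
Proof. by case=> [->|h]; [left|right; lra]. Qed.

Lemma OEN x : OE x -> OE (- x).
Proof. by case=> [->|h]; [left; rewrite oppr0|right; rewrite vN]. Qed.
Lemma MEN x : ME x -> ME (- x).
Proof. by case=> [->|h]; [left; rewrite oppr0|right; rewrite vN]. Qed.

Lemma OED x y : OE x -> OE y -> OE (x + y).
Proof.
move=> hx hy.
have [->|nx] := eqVneq x 0; first by rewrite add0r.
have [->|ny] := eqVneq y 0; first by rewrite addr0.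
have [e|nxy] := eqVneq (x + y) 0; first by left.
right; have h := vU nx ny nxy.
case: hx => [/eqP|hx]; first by rewrite (negbTE nx).
case: hy => [/eqP|hy]; first by rewrite (negbTE ny).
exact: Rle_trans (Rmin_glb (vE x) (vE y) R0 hx hy) h.
Qed.

Lemma MED x y : ME x -> ME y -> ME (x + y).
Proof.
move=> hx hy.
have [->|nx] := eqVneq x 0; first by rewrite add0r.
have [->|ny] := eqVneq y 0; first by rewrite addr0.
have [e|nxy] := eqVneq (x + y) 0; first by left.
right; have h := vU nx ny nxy.
case: hx => [/eqP|hx]; first by rewrite (negbTE nx).
case: hy => [/eqP|hy]; first by rewrite (negbTE ny).
exact: Rlt_le_trans (Rmin_glb_lt (vE x) (vE y) R0 hx hy) h.
Qed.

Lemma OEB x y : OE x -> OE y -> OE (x - y).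
Proof. by move=> hx hy; apply: OED => //; apply: OEN. Qed.
Lemma MEB x y : ME x -> ME y -> ME (x - y).
Proof. by move=> hx hy; apply: MED => //; apply: MEN. Qed.

Lemma OEM x y : OE x -> OE y -> OE (x * y).
Proof.
case=> [->|hx]; first by rewrite mul0r; left.
case=> [->|hy]; first by rewrite mulr0; left.
have [->|nx] := eqVneq x 0; first by rewrite mul0r; left.
have [->|ny] := eqVneq y 0; first by rewrite mulr0; left.
by right; rewrite vM //; lra.
Qed.

Lemma OME x y : OE x -> ME y -> ME (x * y).
Proof.
case=> [->|hx]; first by rewrite mul0r; left.
case=> [->|hy]; first by rewrite mulr0; left.
have [->|nx] := eqVneq x 0; first by rewrite mul0r; left.
have [->|ny] := eqVneq y 0; first by rewrite mulr0; left.
by right; rewrite vM //; lra.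
Qed.

Lemma MOE x y : ME x -> OE y -> ME (x * y).
Proof. by move=> hx hy; rewrite mulrC; apply: OME. Qed.

Lemma not_ME1 : ~ ME 1.
Proof. by case=> [/eqP|]; [rewrite oner_eq0|rewrite v1; lra]. Qed.

Lemma vA0 (a : F) : a != 0 -> (a%:A : E) != 0.
Proof. by move=> na; rewrite -[_%:A]/(a *: 1) scaler_eq0 negb_or na oner_neq0. Qed.

End Val.

Lemma argmin (n : nat) (P : 'I_n -> Prop) (f : 'I_n -> R) :
  (exists i, P i) -> exists i0, P i0 /\ forall i, P i -> Rle (f i0) (f i).
Proof.
move=> [w Pw].
suff H : forall k, (k <= n)%N -> exists i0, P i0 /\
   forall i : 'I_n, (i < k)%N -> P i -> Rle (f i0) (f i).
  have [i0 [P0 H0]] := H n (leqnn n); exists i0; split=> // i; exact: H0.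
elim=> [_|k IH kn]; first by exists w; split.
have [i0 [P0 H0]] := IH (ltnW kn).
pose j := Ordinal kn.
have [[Pj lt]|] := classic (P j /\ Rlt (f j) (f i0)).
  exists j; split=> // i; rewrite ltnS leq_eqVlt => /orP[/eqP ei|ik] Pi.
    have -> : i = j by apply: val_inj; exact: ei.
    exact: Rle_refl.
  by apply: Rlt_le; apply: Rlt_le_trans lt (H0 i ik Pi).
move=> nPj; exists i0; split=> // i; rewrite ltnS leq_eqVlt => /orP[/eqP ei|ik] Pi.
  have eij : i = j by apply: val_inj; exact: ei.
  rewrite eij; rewrite eij in Pi.
  by apply: Rnot_lt_le => hlt; apply: nPj.
exact: H0.
Qed.

Lemma dedupe (T : eqType) (eqv : T -> T -> Prop)
  (refl : forall x, eqv x x) (sym : forall x y, eqv x y -> eqv y x) (d : T) (s : seq T) :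
  exists s', (forall x, x \in s' -> x \in s) /\ (forall x, x \in s -> exists2 y, y \in s' & eqv x y)
   /\ (forall i j, (i < size s')%N -> (j < size s')%N -> eqv (nth d s' i) (nth d s' j) -> i = j).
Proof.
elim: s => [|x s [s' [H1 [H2 H3]]]]; first by exists [::]; split.
have [[y ys exy]|nex] := classic (exists2 y, y \in s' & eqv x y).
  exists s'; split; first by move=> z /H1; rewrite inE orbC => ->.
  split=> // z; rewrite inE => /orP[/eqP->|]; first by exists y.
  exact: H2.
exists (x :: s'); split.
  by move=> z; rewrite !inE => /orP[->//|/H1 ->]; rewrite orbT.
split.
  move=> z; rewrite !inE => /orP[/eqP->|/H2 [y ys ezy]]; first by exists x; rewrite ?inE ?eqxx.
  by exists y; rewrite // inE ys orbT.
case=> [|i] [|j] //= hi hj e.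
- by case: nex; exists (nth d s' j); [apply: mem_nth|].
- by case: nex; exists (nth d s' i); [apply: mem_nth|apply: sym].
- by congr S; apply: H3.
Qed.

Section Res.
Variables (F : fieldType) (v : F -> Z) (E : fieldExtType F) (vE : E -> R).
Hypothesis hvE : extends_val v vE.
Let vM := @vM _ _ _ _ hvE.
Let vU := @vU _ _ _ _ hvE.
Let vA := @vA _ _ _ _ hvE.
Let v1 := @v1 _ _ _ _ hvE.
Let vN1 := @vN1 _ _ _ _ hvE.
Let vN := @vN _ _ _ _ hvE.
Let vV := @vV _ _ _ _ hvE.
Let OE1 := @OE1 _ _ _ _ hvE.
Let OEN := @OEN _ _ _ _ hvE.
Let MEN := @MEN _ _ _ _ hvE.
Let OED := @OED _ _ _ _ hvE.
Let MED := @MED _ _ _ _ hvE.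
Let OEB := @OEB _ _ _ _ hvE.
Let MEB := @MEB _ _ _ _ hvE.
Let OEM := @OEM _ _ _ _ hvE.
Let OME := @OME _ _ _ _ hvE.
Let MOE := @MOE _ _ _ _ hvE.
Let not_ME1 := @not_ME1 _ _ _ _ hvE.
Variable sF : seq F.
Hypothesis hsF1 : forall r, r \in sF -> OE vE (r%:A).
Hypothesis hsF2 : forall a : F, OE vE (a%:A) -> exists2 r, r \in sF & ME vE ((a - r)%:A).

Lemma algM (a b : F) : (a * b)%:A = a%:A * (b%:A : E).
Proof. by rewrite mulr_algl scalerA. Qed.
Lemma algB (a b : F) : (a - b)%:A = a%:A - (b%:A : E).
Proof. by rewrite scalerBl. Qed.
Lemma algZ (a : F) (y : E) : a *: y = a%:A * y.
Proof. by rewrite mulr_algl. Qed.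

Fixpoint comb (as_ : seq F) (ys : seq E) : E :=
  match as_, ys with
  | a :: as', y :: ys' => a *: y + comb as' ys'
  | _, _ => 0
  end.

Lemma comb_scale c as_ ys : comb (map (fun a => c * a) as_) ys = c *: comb as_ ys.
Proof.
elim: as_ ys => [|a as_ IH] [|y ys] /=; rewrite ?scaler0 //.
by rewrite IH scalerDr scalerA.
Qed.

Lemma comb_sum as_ ys : size as_ = size ys ->
  comb as_ ys = \sum_(i < size ys) as_`_i *: ys`_i.
Proof.
elim: ys as_ => [|y ys IH] [|a as_] //=; first by rewrite big_ord0.
by move=> [e]; rewrite big_ord_recl /= IH.
Qed.

Definition resind (ys : seq E) :=
  (forall y, y \in ys -> OE vE y) /\
  forall as_ : seq F, size as_ = size ys -> (forall a, a \in as_ -> OE vE (a%:A)) ->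
    (exists2 a, a \in as_ & ~ ME vE (a%:A)) -> ~ ME vE (comb as_ ys).

Lemma resind_free ys : resind ys -> free ys.
Proof.
move=> [_ H].
apply/(@freeP _ _ _ (in_tuple ys)) => k hk i; apply/eqP/negP => /negP nki.
have [i0 [P0 H0]] := @argmin _ (fun i => k i != 0) (fun i => vE ((k i)%:A)) (ex_intro _ i nki).
pose as_ := [seq k j / k i0 | j <- enum 'I_(size ys)].
have nthas : forall j : 'I_(size ys), as_`_j = k j / k i0.
  move=> j; rewrite (nth_map j); last by rewrite size_enum_ord.
  by rewrite nth_ord_enum.
have sz : size as_ = size ys by rewrite size_map size_enum_ord.
apply: (H as_ sz).
- move=> a /mapP [j _ ->].
  have [kj0|nkj] := eqVneq (k j) 0; first by rewrite kj0 mul0r scale0r; left.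
  right.
  have e : (k j)%:A = (k i0)%:A * ((k j / k i0)%:A : E).
    by rewrite -algM mulrC divfK.
  have n1 : ((k i0)%:A : E) != 0 by apply: vA0.
  have n2 : ((k j / k i0)%:A : E) != 0 by apply: vA0; rewrite mulf_neq0 ?invr_eq0.
  have := H0 j nkj; rewrite e vM //.
  move=> h; apply: (Rplus_le_reg_l (vE (k i0)%:A)); rewrite Rplus_0_r; exact: h.
- exists 1; last by rewrite scale1r; apply: not_ME1.
  apply/mapP; exists i0; first by rewrite mem_enum.
  by rewrite divff.
- left; rewrite comb_sum //.
  under eq_bigr => j _ do rewrite nthas mulrC -scalerA.
  by rewrite -scaler_sumr hk scaler0.
Qed.

Lemma resind_size ys : resind ys -> (size ys <= \dim (fullv : {vspace E}))%N.
Proof.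
move=> /resind_free /eqnP <-; exact: dimvS (subvf _).
Qed.

Lemma exists_max : exists ys, resind ys /\ forall x, OE vE x -> ~ resind (x :: ys).
Proof.
set d := \dim (fullv : {vspace E}).
suff H : forall m ys, resind ys -> (d - size ys <= m)%N ->
   exists ys, resind ys /\ forall x, OE vE x -> ~ resind (x :: ys).
  apply: (H d [::]) => //; last by rewrite subn0.
  split=> // as_; case: as_ => // _ _ [a]; by rewrite in_nil.
elim=> [|m IH] ys Hys Hm.
  exists ys; split=> // x _ Hx; have := resind_size Hx; rewrite /=; lia.
have [[x [Ox Hx]]|nex] := classic (exists x, OE vE x /\ resind (x :: ys)).
  apply: (IH (x :: ys) Hx); have := resind_size Hx; rewrite /=; lia.
by exists ys; split=> // x Ox Hx; apply: nex; exists x.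
Qed.

Fixpoint combos (ys : seq E) : seq E :=
  match ys with
  | [::] => [:: 0]
  | y :: ys' => [seq r *: y + z | r <- sF, z <- combos ys']
  end.

Lemma combos_OE ys : (forall y, y \in ys -> OE vE y) -> forall c, c \in combos ys -> OE vE c.
Proof.
elim: ys => [|y ys IH] Hy c /=; first by rewrite inE => /eqP->; left.
move=> /allpairsP [[r z] [/= hr hz ->]].
apply: OED; last by apply: IH => // w hw; apply: Hy; rewrite inE hw orbT.
rewrite algZ; apply: OEM; first exact: hsF1.
by apply: Hy; rewrite inE eqxx.
Qed.

Lemma combos_approx ys : (forall y, y \in ys -> OE vE y) ->
  forall as_, size as_ = size ys -> (forall a, a \in as_ -> OE vE (a%:A)) ->
  exists2 c, c \in combos ys & ME vE (comb as_ ys - c).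
Proof.
elim: ys => [|y ys IH] Hy [|a as_] //= sz Ha.
  by exists 0; rewrite ?inE ?subr0 //; left.
have [r hr Mr] := hsF2 (Ha a (mem_head _ _)).
have [|||c hc Mc] := IH _ as_.
- by move=> w hw; apply: Hy; rewrite inE hw orbT.
- by case: sz.
- by move=> b hb; apply: Ha; rewrite inE hb orbT.
exists (r *: y + c); first by apply/allpairsP; exists (r, c).
have -> : a *: y + comb as_ ys - (r *: y + c) = (a - r)%:A * y + (comb as_ ys - c).
  by rewrite algB mulrBl (algZ a y) (algZ r y) opprD addrACA.
apply: MED => //; apply: MOE => //; apply: Hy; exact: mem_head.
Qed.

Lemma residue_list : exists cs : seq E, (forall c, c \in cs -> OE vE c) /\
  forall x, OE vE x -> exists2 c, c \in cs & ME vE (x - c).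
Proof.
have [ys [[Oys Hys] Hmax]] := exists_max.
exists (combos ys); split; first exact: combos_OE.
move=> x Ox.
have : ~ resind (x :: ys) by apply: Hmax.
move=> /not_and_or [|]; first by case; move=> y; rewrite inE => /orP[/eqP->|/Oys].
move=> /not_all_ex_not [as_ H1].
have [sz H2] := imply_to_and _ _ H1.
have [Oas H3] := imply_to_and _ _ H2.
have [[b hb nb] H4] := imply_to_and _ _ H3.
have Mc := NNPP _ H4.
clear H1 H2 H3 H4.
case: as_ sz Oas hb Mc => [|a0 as_] //= [sz] Oas hb Mc.
have Oa0 : OE vE (a0%:A) by apply: Oas; rewrite inE eqxx.
have Oas' : forall a, a \in as_ -> OE vE (a%:A) by move=> a ha; apply: Oas; rewrite inE ha orbT.
have [Ma0|nMa0] := classic (ME vE (a0%:A)).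
  exfalso; apply: (Hys as_ sz Oas').
    move: hb; rewrite inE => /orP[/eqP eb|hb]; last by exists b.
    by rewrite eb in nb.
  have -> : comb as_ ys = (a0 *: x + comb as_ ys) - a0%:A * x by rewrite (algZ a0 x) addrAC subrr add0r.
  by apply: MEB => //; apply: MOE.
have a00 : a0 != 0 by apply/eqP => e; apply: nMa0; rewrite e scale0r; left.
have va0 : vE (a0%:A) = R0.
  case: Oa0 => [e|h]; first by case/eqP: (@vA0 _ E a0 a00).
  by apply: Rle_antisym => //; apply: Rnot_lt_le => hh; apply: nMa0; right.
have e1 : (a0^-1)%:A = ((a0%:A : E)^-1).
  apply: (mulfI (@vA0 _ E a0 a00)).
  by rewrite -algM divff // (mulfV (@vA0 _ E a0 a00)) scale1r.
pose as' := map (fun a => - a0^-1 * a) as_.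
have Oas2 : forall a, a \in as' -> OE vE (a%:A).
  move=> a /mapP [b' hb' ->]; rewrite algM; apply: OEM; last exact: Oas'.
  rewrite -[_%:A]/((- a0^-1) *: 1) scaleNr; apply: OEN.
  right.
  rewrite -[(a0^-1) *: 1]/((a0^-1)%:A) e1 (vV (@vA0 _ E a0 a00)).
  have h0 : vE (a0%:A : E) = R0 := va0. rewrite h0; lra.
have [c hc Mc2] := combos_approx Oys (as_ := as') ltac:(by rewrite size_map) Oas2.
exists c => //.
have -> : x - c = (a0^-1)%:A * (a0 *: x + comb as_ ys) + (comb as' ys - c).
  rewrite comb_scale !mulr_algl scalerDr scalerA mulVf // scale1r scaleNr.
  by rewrite -addrA addNKr.
apply: MED => //; apply: OME => //.
right.
rewrite e1 (vV (@vA0 _ E a0 a00)).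
have h0 : vE (a0%:A : E) = R0 := va0. rewrite h0; lra.
Qed.

Lemma residue_system : exists K (s : 'I_K -> E), (forall k, OE vE (s k)) /\
  (forall k k', ME vE (s k - s k') -> k = k') /\
  (forall x, OE vE x -> exists k, ME vE (x - s k)).
Proof.
have [cs [Ocs Hcs]] := residue_list.
have refl : forall x, ME vE (x - x) by move=> x; rewrite subrr; left.
have sym : forall x y, ME vE (x - y) -> ME vE (y - x).
  by move=> x y h; rewrite -opprB; apply: MEN.
have [s' [H1 [H2 H3]]] := dedupe refl sym 0 cs.
exists (size s'), (fun k => nth 0 s' k); split; last split.
- by move=> k; apply: Ocs; apply: H1; apply: mem_nth.
- by move=> k k' h; apply: val_inj; apply: H3 => //; apply: ltn_ord.
- move=> x Ox; have [c hc Mc] := Hcs x Ox.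
  have [y hy Mcy] := H2 c hc.
  have hi : (index y s' < size s')%N by rewrite index_mem.
  exists (Ordinal hi) => /=; rewrite nth_index //.
  have -> : x - y = (x - c) + (c - y) by rewrite addrA addrNK.
  exact: MED.
Qed.
End Res.

Definition gtER (o : option R) (r : R) : Prop :=
  match o with None => True | Some a => Rlt r a end.

Definition pb (P : Prop) : bool :=
  if excluded_middle_informative P then true else false.
Lemma pbP (P : Prop) : pb P <-> P.
Proof. by rewrite /pb; case: excluded_middle_informative. Qed.

Section Norm.
Variables (F : fieldType) (v : F -> Z) (E : fieldExtType F) (vE : E -> R).
Hypothesis hvE : extends_val v vE.
Variables (V : vectType E) (N : V -> option R).
Hypothesis hN : isENorm vE N.

Let vM := @vM _ _ _ _ hvE.
Let vN1 := @vN1 _ _ _ _ hvE.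
Let vV := @vV _ _ _ _ hvE.

Lemma N_None x : N x = None <-> x = 0.
Proof. by case: hN => h _ _ _; apply: h. Qed.
Lemma N0 : N 0 = None.
Proof. by apply/N_None. Qed.
Lemma N_ult x y r : geER (N x) r -> geER (N y) r -> geER (N (x + y)) r.
Proof. by case: hN => _ h _ _; apply: h. Qed.
Lemma N_scale (l : E) x : l != 0 -> N (l *: x) = addER (vE l) (N x).
Proof. by case: hN => _ _ h _; apply: h. Qed.

Lemma Nopp x : N (- x) = N x.
Proof.
have h : (-1 : E) != 0 by rewrite oppr_eq0 oner_neq0.
rewrite -scaleN1r N_scale // vN1; case: (N x) => //= a; congr Some; lra.
Qed.

Lemma gt_add x y r : gtER (N x) r -> gtER (N y) r -> gtER (N (x + y)) r.
Proof.
case ex: (N x) => [a|]; last by move=> _ hy; rewrite (proj1 (N_None x) ex) add0r.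
case ey: (N y) => [b|]; last by move=> hx _; rewrite (proj1 (N_None y) ey) addr0 ex.
move=> /= ha hb.
have := @N_ult x y (Rmin a b); rewrite ex ey /= => H.
have := H (Rmin_l a b) (Rmin_r a b).
case: (N (x + y)) => //= c hc.
apply: Rlt_le_trans hc; exact: Rmin_glb_lt.
Qed.

Lemma gt_opp x r : gtER (N x) r -> gtER (N (- x)) r.
Proof. by rewrite Nopp. Qed.

Lemma gt_sub x y r : gtER (N x) r -> gtER (N y) r -> gtER (N (x - y)) r.
Proof. by move=> hx hy; apply: gt_add => //; apply: gt_opp. Qed.

Definition repsys (T : finType) (rho : T -> V) r :=
  [/\ (forall t, geER (N (rho t)) r),
      (forall t t', gtER (N (rho t - rho t')) r -> t = t')
    & (forall x, geER (N x) r -> exists t, gtER (N (x - rho t)) r)].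

Lemma repsys_le (T1 T2 : finType) (rho1 : T1 -> V) (rho2 : T2 -> V) r :
  repsys rho1 r -> repsys rho2 r -> (#|T1| <= #|T2|)%N.
Proof.
move=> [A1 B1 C1] [A2 B2 C2].
pose phi t := proj1_sig (constructive_indefinite_description _ (C2 _ (A1 t))).
have phiP t : gtER (N (rho1 t - rho2 (phi t))) r by rewrite /phi; case: constructive_indefinite_description.
apply: (@leq_card _ _ phi) => t t' e.
apply: B1; have -> : rho1 t - rho1 t' = (rho1 t - rho2 (phi t)) - (rho1 t' - rho2 (phi t')).
  by rewrite e opprB addrA addrNK.
by apply: gt_sub.
Qed.

Lemma repsys_card (T1 T2 : finType) (rho1 : T1 -> V) (rho2 : T2 -> V) r :
  repsys rho1 r -> repsys rho2 r -> #|T1| = #|T2|.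
Proof. by move=> h1 h2; apply/eqP; rewrite eqn_leq !(repsys_le h1 h2, repsys_le h2 h1). Qed.

Variables (n : nat) (e : 'I_n -> V).
Hypothesis hcoord : forall x : V, exists! c : {ffun 'I_n -> E}, x = \sum_(i < n) c i *: e i.
Hypothesis hsplit : forall (c : {ffun 'I_n -> E}) (r : R),
           geER (N (\sum_(i < n) c i *: e i)) r <->
           (forall i, c i = 0 \/ geER (addER (vE (c i)) (N (e i))) r).

Lemma e_neq0 i : e i != 0.
Proof.
apply/eqP => ei.
have [c [_ U]] := hcoord 0.
have h1 := U [ffun _ => 0]; have h2 := U [ffun j => if j == i then 1 else 0].
have e1 : [ffun _ => 0] = [ffun j => if j == i then 1 else 0 : E].
  rewrite -h1 ?h2 //.
  - rewrite (bigD1 i) //= ffunE eqxx scale1r ei add0r big1 // => j /negbTE nj.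
    by rewrite ffunE nj scale0r.
  - by rewrite big1 // => j _; rewrite ffunE scale0r.
by move/ffunP: e1 => /(_ i); rewrite !ffunE eqxx => /eqP; rewrite eq_sym oner_eq0.
Qed.

Definition bv i := if N (e i) is Some a then a else R0.
Lemma Ne i : N (e i) = Some (bv i).
Proof.
rewrite /bv; case h: (N (e i)) => [a|] //.
by move: h => /N_None /eqP; rewrite (negbTE (e_neq0 i)).
Qed.

Lemma Nsum_ge (c : 'I_n -> E) r : geER (N (\sum_(i < n) c i *: e i)) r <->
  (forall i, c i = 0 \/ Rle r (Rplus (vE (c i)) (bv i))).
Proof.
have -> : \sum_(i < n) c i *: e i = \sum_(i < n) [ffun i => c i] i *: e i.
  by apply: eq_bigr => i _; rewrite ffunE.
rewrite hsplit; split=> H i; have := H i; rewrite ?ffunE Ne //.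
Qed.

Lemma Nsum_gt (c : 'I_n -> E) r : gtER (N (\sum_(i < n) c i *: e i)) r <->
  (forall i, c i = 0 \/ Rlt r (Rplus (vE (c i)) (bv i))).
Proof.
split.
  case eX: (N _) => [a|] /= H i.
    have := (proj1 (Nsum_ge c a)); rewrite eX /= => /(_ (Rle_refl a)) /(_ i).
    by case=> [->|h]; [left|right; apply: Rlt_le_trans h].
  have [->|nc] := eqVneq (c i) 0; first by left.
  have := (proj1 (Nsum_ge c (Rplus (Rplus (vE (c i)) (bv i)) R1))); rewrite eX /=.
  move=> /(_ I) /(_ i) [/eqP|]; first by rewrite (negbTE nc).
  set u := Rplus (vE (c i)) (bv i) => h; exfalso; lra.
move=> H.
have [[i ni]|] := classic (exists i, c i <> 0); last first.
  move=> nex; have -> : \sum_(i < n) c i *: e i = 0.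
    rewrite big1 // => i _; have [->|ni] := eqVneq (c i) 0; first by rewrite scale0r.
    by case: nex; exists i; apply/eqP.
  by rewrite N0.
have [i0 [P0 H0]] := @argmin _ (fun i => c i <> 0) (fun i => Rplus (vE (c i)) (bv i)) (ex_intro _ i ni).
have m_gt : Rlt r (Rplus (vE (c i0)) (bv i0)) by case: (H i0).
have HG : geER (N (\sum_(i < n) c i *: e i)) (Rplus (vE (c i0)) (bv i0)).
  apply: (proj2 (Nsum_ge c _)) => j.
  have [->|nj] := eqVneq (c j) 0; first by left.
  by right; apply: H0; apply/eqP.
move: HG; case: (N _) => //= a ha; exact: Rlt_le_trans m_gt ha.
Qed.

Definition cls (x y : R) := exists l : E, l != 0 /\ Rplus (vE l) x = y.

Variables (K : nat) (s : 'I_K -> E).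
Hypothesis hs1 : forall k, OE vE (s k).
Hypothesis hs2 : forall k k', ME vE (s k - s k') -> k = k'.
Hypothesis hs3 : forall x, OE vE x -> exists k, ME vE (x - s k).

Section Count.
Variable r : R.
Definition Pr i := pb (cls (bv i) r).
Definition lam i : E :=
  match excluded_middle_informative (cls (bv i) r) with
  | left H => proj1_sig (constructive_indefinite_description _ H)
  | right _ => 1 end.
Lemma lamP i : Pr i -> lam i != 0 /\ Rplus (vE (lam i)) (bv i) = r.
Proof.
move=> /pbP; rewrite /lam; case: excluded_middle_informative => // H _.
by case: constructive_indefinite_description => l [nl hl].
Qed.

Definition J := {i : 'I_n | Pr i}.
Definition coef (t : {ffun J -> 'I_K}) (i : 'I_n) : E :=
  if (insub i : option J) is Some j then s (t j) * lam i else 0.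
Definition rho t := \sum_(i < n) coef t i *: e i.

Lemma coef_val t (j : J) : coef t (val j) = s (t j) * lam (val j).
Proof. by rewrite /coef valK. Qed.

Lemma card_J : #|{ffun J -> 'I_K}| = (K ^ #|[pred i | Pr i]|)%N.
Proof. by rewrite card_ffun card_ord card_sig. Qed.

Lemma rho_repsys : repsys rho r.
Proof.
split.
- move=> t; apply/Nsum_ge => i; rewrite /coef; case: insubP => [j Pi vj|_]; last by left.
  have [nl hl] := lamP Pi.
  have [->|ns] := eqVneq (s (t j)) 0; first by left; rewrite mul0r.
  right; rewrite (vM ns nl) Rplus_assoc hl.
  case: (hs1 (t j)) => [/eqP|h]; first by rewrite (negbTE ns).
  set u := vE _ in h *; lra.
- move=> t t'; rewrite /rho -sumrB.
  under eq_bigr => i _ do rewrite -scalerBl.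
  move=> /Nsum_gt H; apply/ffunP => j; apply: hs2.
  have [nl hl] := lamP (valP j).
  have := H (val j); rewrite !coef_val -mulrBl.
  have [->|nd] := eqVneq (s (t j) - s (t' j)) 0; first by left.
  case=> [/eqP|h]; first by rewrite mulf_eq0 (negbTE nd) (negbTE nl).
  right; move: h; rewrite (vM nd nl) Rplus_assoc hl.
  by set u := vE _ => h; lra.
- move=> x hx.
  have [c [xc _]] := hcoord x.
  have Hc : forall i, c i = 0 \/ Rle r (Rplus (vE (c i)) (bv i)).
    by apply/Nsum_ge; rewrite -xc.
  have hq : forall j : J, OE vE (c (val j) / lam (val j)).
    move=> j; have [nl hl] := lamP (valP j).
    have [->|nc] := eqVneq (c (val j)) 0; first by rewrite mul0r; left.
    have nl' : (lam (val j))^-1 != 0 by rewrite invr_eq0.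
    right; rewrite (vM nc nl') (vV nl).
    case: (Hc (val j)) => [/eqP|h]; first by rewrite (negbTE nc).
    move: h hl; set u := vE (c _); set w := vE (lam _) => h hl; lra.
  pose kf j := proj1_sig (constructive_indefinite_description _ (hs3 (hq j))).
  have kfP j : ME vE (c (val j) / lam (val j) - s (kf j)).
    by rewrite /kf; case: constructive_indefinite_description.
  exists [ffun j => kf j].
  rewrite {1}xc /rho -sumrB.
  under eq_bigr => i _ do rewrite -scalerBl.
  apply/Nsum_gt => i; rewrite /coef; case: insubP => [j Pi vj|nPi].
    have [nl hl] := lamP Pi.
    rewrite ffunE; subst i.
    have -> : c (val j) - s (kf j) * lam (val j) = (c (val j) / lam (val j) - s (kf j)) * lam (val j).
      by rewrite mulrBl divfK.
    case: (kfP j) => [->|h]; first by left; rewrite mul0r.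
    have [->|nd] := eqVneq (c (val j) / lam (val j) - s (kf j)) 0; first by left; rewrite mul0r.
    right; rewrite (vM nd nl) Rplus_assoc hl.
    move: h; set u := vE _ => h; lra.
  rewrite subr0; have [->|nc] := eqVneq (c i) 0; first by left.
  case: (Hc i) => [/eqP|h]; first by rewrite (negbTE nc).
  right; case: (Rle_lt_or_eq_dec _ _ h) => // eq; move/negP: nPi; case; apply/pbP.
  by exists (c i); split.
Qed.

Lemma count_repsys (T : finType) (rho' : T -> V) :
  repsys rho' r -> #|T| = (K ^ #|[pred i | Pr i]|)%N.
Proof. by move=> h; rewrite -card_J; apply: repsys_card h rho_repsys. Qed.

End Count.
End Norm.

HB.instance Definition _ := hasDecEq.Build R (compareP Req_dec_T).

Lemma card_count (T : finType) (P : pred T) : #|[pred i | P i]| = count P (enum T).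
Proof. by rewrite enumT cardE /enum_mem size_filter. Qed.

Lemma count_map_card (T : finType) (f : T -> R) x :
  count_mem x [seq f i | i <- enum T] = #|[pred i | f i == x]|.
Proof. by rewrite count_map card_count. Qed.

Section Match.
Variable c : R -> R -> Prop.
Hypothesis crefl : forall x, c x x.
Hypothesis csym : forall x y, c x y -> c y x.
Hypothesis ctrans : forall x y z, c x y -> c y z -> c x z.

Definition rep (x : R) : R := epsilon (inhabits R0) (fun z => c z x).
Lemma rep_c x : c (rep x) x.
Proof. by rewrite /rep; apply: (epsilon_spec (inhabits R0) (fun z => c z x)); exists x. Qed.
Lemma rep_eq x y : c x y -> rep x = rep y.
Proof.
move=> h; rewrite /rep; congr epsilon; apply: functional_extensionality => z.
apply: propositional_extensionality; split=> hz; [exact: ctrans hz h|exact: ctrans hz (csym h)].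
Qed.
Lemma rep_iff x y : c x y <-> rep x = rep y.
Proof.
split; first exact: rep_eq.
move=> e; apply: ctrans (csym (rep_c x)) _; rewrite e; exact: rep_c.
Qed.

Lemma match_classes n1 n2 (a : 'I_n1 -> R) (b : 'I_n2 -> R) :
  (forall r, #|[pred i | pb (c (a i) r)]| = #|[pred j | pb (c (b j) r)]|) ->
  n1 = n2 /\ exists2 sg : 'I_n1 -> 'I_n2, injective sg & forall i, c (a i) (b (sg i)).
Proof.
move=> H.
pose A := [seq rep (a i) | i <- enum 'I_n1].
pose B := [seq rep (b j) | j <- enum 'I_n2].
have cnt : forall x, rep x = x -> count_mem x A = count_mem x B.
  move=> x rx; rewrite !count_map_card.
  have := H x; rewrite -rx.
  have -> : #|[pred i | pb (c (a i) (rep x))]| = #|[pred i | rep (a i) == rep x]|.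
    apply: eq_card => i; rewrite !inE /=; apply/idP/idP.
      by move/pbP => h; apply/eqP; rewrite (rep_eq h) (rep_eq (rep_c x)).
    by move/eqP => h; apply/pbP; apply: (ctrans ((proj2 (rep_iff _ _)) h)); apply: csym; apply: rep_c.
  have -> : #|[pred i | pb (c (b i) (rep x))]| = #|[pred i | rep (b i) == rep x]|.
    apply: eq_card => i; rewrite !inE /=; apply/idP/idP.
      by move/pbP => h; apply/eqP; rewrite (rep_eq h) (rep_eq (rep_c x)).
    by move/eqP => h; apply/pbP; apply: (ctrans ((proj2 (rep_iff _ _)) h)); apply: csym; apply: rep_c.
  done.
have pAB : perm_eq A B.
  apply/allP => x hx; apply/eqP; apply: cnt.
  move: hx; rewrite mem_cat => /orP[] /mapP [i _ ->]; apply/esym; apply: rep_eq; apply: csym; apply: rep_c.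
have sz : n1 = n2.
  by have := perm_size pAB; rewrite /A /B !size_map -!enumT !size_enum_ord.
split=> //.
have [Is pIs eA] := perm_iotaP R0 pAB.
have szIs : size Is = n1 by rewrite -(size_map (nth R0 B)) -eA /A size_map size_enum_ord.
have uIs : uniq Is by rewrite (perm_uniq pIs) iota_uniq.
have lt (i : 'I_n1) : (nth 0%N Is i < n2)%N.
  have : nth 0%N Is i \in iota 0 (size B).
    by rewrite -(perm_mem pIs); apply: mem_nth; rewrite szIs.
  by rewrite mem_iota add0n /B size_map size_enum_ord.
exists (fun i => Ordinal (lt i)).
  move=> i j [] e; apply: val_inj => /=.
  by apply/eqP; rewrite -(nth_uniq 0%N _ _ uIs) ?szIs ?e.
move=> i; apply/rep_iff.
have : nth R0 A i = nth R0 [seq nth R0 B i | i <- Is] i by rewrite -eA.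
rewrite /A (nth_map i) ?size_enum_ord // nth_ord_enum (nth_map 0%N) ?szIs // /B.
rewrite (nth_map (Ordinal (lt i))) ?size_enum_ord //.
have -> : nth (Ordinal (lt i)) (enum 'I_n2) (nth 0%N Is i) = Ordinal (lt i).
  by apply: val_inj; rewrite /= nth_enum_ord.
done.
Qed.
End Match.

Lemma opt_ext (o1 o2 : option R) : (forall r, geER o1 r <-> geER o2 r) -> o1 = o2.
Proof.
case: o1 => [a|]; case: o2 => [b|] //= H.
- congr Some; apply: Rle_antisym; [apply/(H a)|apply/(H b)]; exact: Rle_refl.
- by have := proj2 (H (Rplus a R1)) I; lra.
- by have := proj1 (H (Rplus b R1)) I; lra.
Qed.

Section Key.
Variables (F : fieldType) (v : F -> Z) (E : fieldExtType F) (vE : E -> R).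
Hypothesis hvE : extends_val v vE.
Variables (V : vectType E) (B N' : V -> option R).
Hypothesis hB : isENorm vE B.
Hypothesis hN' : isENorm vE N'.
Variables (g : V -> V).
Hypothesis gadd : forall x y, g (x + y) = g x + g y.
Hypothesis gsurj : forall y, exists x, y = g x.
Hypothesis hg : forall x, N' x = B (g x).
Variables (K : nat) (s : 'I_K -> E).
Hypothesis hs1 : forall k, OE vE (s k).
Hypothesis hs2 : forall k k', ME vE (s k - s k') -> k = k'.
Hypothesis hs3 : forall x, OE vE x -> exists k, ME vE (x - s k).
Hypothesis hK : (1 < K)%N.

Let vM := @vM _ _ _ _ hvE.
Let v1 := @v1 _ _ _ _ hvE.
Let vV := @vV _ _ _ _ hvE.

Lemma cls_refl x : cls vE x x.
Proof. exists 1; split; first exact: oner_neq0. by rewrite v1 Rplus_0_l. Qed.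
Lemma cls_sym x y : cls vE x y -> cls vE y x.
Proof.
move=> [l [nl hl]]; exists l^-1; split; first by rewrite invr_eq0.
rewrite (vV nl) -hl; set u := vE l; lra.
Qed.
Lemma cls_trans x y z : cls vE x y -> cls vE y z -> cls vE x z.
Proof.
move=> [l [nl hl]] [l' [nl' hl']]; exists (l' * l); split; first by rewrite mulf_neq0.
rewrite (vM nl' nl) -hl' -hl; set u := vE l; set w := vE l'; lra.
Qed.

Lemma g0 : g 0 = 0.
Proof. have h := gadd 0 0; rewrite addr0 in h; by apply: (addrI (g 0)); rewrite -h addr0. Qed.
Lemma gB x y : g (x - y) = g x - g y.
Proof. by apply/eqP; rewrite eq_sym subr_eq -gadd addrNK. Qed.

Lemma transport r (T : finType) (rho : T -> V) : repsys N' rho r -> repsys B (fun t => g (rho t)) r.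
Proof.
move=> [A1 B1 C1]; split.
- by move=> t; rewrite -hg.
- by move=> t t'; rewrite -gB -hg; apply: B1.
- move=> y; have [x ->] := gsurj y; rewrite -hg => /C1 [t ht].
  by exists t; rewrite -gB -hg.
Qed.

Theorem key : exists h : V -> V, E_aut h /\ forall x, B (h x) = N' x.
Proof.
have [_ _ _ [n2 [e [hc2 hsp2]]]] := hB.
have [_ _ _ [n1 [f [hc1 hsp1]]]] := hN'.
have cnt : forall r, #|[pred i | pb (cls vE (bv N' f i) r)]| = #|[pred j | pb (cls vE (bv B e j) r)]|.
  move=> r; have R1 := rho_repsys hvE hN' hc1 hsp1 hs1 hs2 hs3 r.
  have R2 := transport R1.
  have := count_repsys hvE hB hc2 hsp2 hs1 hs2 hs3 R2.
  by rewrite card_J => /eqP; rewrite eqn_exp2l // => /eqP.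
have [en [sg sginj sgc]] := match_classes cls_refl cls_sym cls_trans cnt.
subst n2.
have [sgi sgK sgKV] := injF_bij sginj.
have hl : forall i, exists l : E, l != 0 /\ Rplus (vE l) (bv B e (sg i)) = bv N' f i.
  by move=> i; have [l [nl hl]] := cls_sym (sgc i); exists l.
pose lamf i := proj1_sig (constructive_indefinite_description _ (hl i)).
have lamfP i : lamf i != 0 /\ Rplus (vE (lamf i)) (bv B e (sg i)) = bv N' f i.
  by rewrite /lamf; case: constructive_indefinite_description.
pose cf x := proj1_sig (constructive_indefinite_description _ (hc1 x)).
have cfP x : x = \sum_(i < n1) cf x i *: f i /\
    forall c' : {ffun 'I_n1 -> E}, x = \sum_(i < n1) c' i *: f i -> cf x = c'.
  by rewrite /cf; case: constructive_indefinite_description => c [].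
pose h x := \sum_(i < n1) (cf x i * lamf i) *: e (sg i).
have cf_add x y : cf (x + y) = [ffun i => cf x i + cf y i].
  apply: (proj2 (cfP (x + y))).
  have ex := proj1 (cfP x); have ey := proj1 (cfP y).
  rewrite [in LHS]ex [in LHS]ey -big_split; apply: eq_bigr => i _.
  by rewrite ffunE scalerDl.
have cf_scale l x : cf (l *: x) = [ffun i => l * cf x i].
  apply: (proj2 (cfP (l *: x))).
  have ex := proj1 (cfP x).
  rewrite [in LHS]ex scaler_sumr; apply: eq_bigr => i _.
  by rewrite ffunE scalerA.
have hadd x y : h (x + y) = h x + h y.
  rewrite /h cf_add -big_split; apply: eq_bigr => i _.
  by rewrite ffunE mulrDl scalerDl.
have hlin l x : h (l *: x) = l *: h x.
  rewrite /h cf_scale scaler_sumr; apply: eq_bigr => i _.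
  by rewrite ffunE -mulrA scalerA.
have pidx x r i : (cf x i * lamf i = 0 \/ Rle r (Rplus (vE (cf x i * lamf i)) (bv B e (sg i)))) <->
                  (cf x i = 0 \/ Rle r (Rplus (vE (cf x i)) (bv N' f i))).
  have [nl el] := lamfP i.
  have [->|nc] := eqVneq (cf x i) 0; first by rewrite mul0r; split=> _; left.
  have ncl : cf x i * lamf i != 0 by rewrite mulf_neq0.
  rewrite (vM nc nl) Rplus_assoc el.
  split; case=> [/eqP|hh]; try (by rewrite ?(negbTE ncl) ?(negbTE nc)); by right.
have hnorm x : B (h x) = N' x.
  apply: opt_ext => r.
  have ehx : h x = \sum_(j < n1) (cf x (sgi j) * lamf (sgi j)) *: e j.
    rewrite /h [RHS](reindex_inj sginj); apply: eq_bigr => i _.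
    by rewrite sgK.
  rewrite ehx (Nsum_ge hB hc2 hsp2).
  have := Nsum_ge hN' hc1 hsp1 (cf x) r; rewrite -(proj1 (cfP x)) => ->.
  split=> H.
    move=> i; apply/pidx; have := H (sg i); by rewrite sgK.
  move=> j; have -> : bv B e j = bv B e (sg (sgi j)) by rewrite sgKV.
  by apply/pidx; apply: H.
have hinj : injective h.
  move=> x y hxy.
  have h0 : h (x - y) = 0.
    by apply: (addIr (h y)); rewrite -hadd addrNK hxy add0r.
  apply/eqP; rewrite -subr_eq0; apply/eqP; apply/(N_None hN').
  by rewrite -hnorm h0; apply/(N_None hB).
have hsurj y : exists x, h x = y.
  have [cy [ey _]] := hc2 y.
  set X := \sum_(i < n1) (cy (sg i) / lamf i) *: f i.
  exists X.
  have Ecf : cf X = [ffun i => cy (sg i) / lamf i].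
    apply: (proj2 (cfP X)); rewrite /X; apply: eq_bigr => i _; by rewrite ffunE.
  rewrite /h Ecf ey [RHS](reindex_inj sginj); apply: eq_bigr => i _.
  by rewrite ffunE divfK //; case: (lamfP i).
pose hinv y := proj1_sig (constructive_indefinite_description _ (hsurj y)).
have hinvP y : h (hinv y) = y by rewrite /hinv; case: constructive_indefinite_description.
exists h; split=> //; split=> //.
by exists hinv => [x|y]; [apply: hinj; rewrite hinvP|apply: hinvP].
Qed.
End Key.

Section Final.
Variables (F : fieldType) (E : fieldExtType F) (vE : E -> R) (V : vectType E).

Lemma latt_ext (N1 N2 : V -> option R) L : (forall x, N1 x = N2 x) -> (latt N1 L <-> latt N2 L).
Proof. by move=> H; split=> [[r hr]|[r hr]]; exists r => x; rewrite hr H. Qed.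

Lemma latt_Lext (N : V -> option R) (L1 L2 : V -> Prop) : (forall x, L1 x <-> L2 x) -> (latt N L1 <-> latt N L2).
Proof. by move=> H; split=> [[r hr]|[r hr]]; exists r => x; rewrite -hr H. Qed.

Lemma latt_comp (N : V -> option R) (h hinv : V -> V) L : cancel h hinv -> cancel hinv h ->
  (latt (N \o h) L <-> latt N (fun y => L (hinv y))).
Proof.
move=> hK hKV; split=> [[r hr]|[r hr]]; exists r => x /=.
  by rewrite hr /= hKV.
by rewrite -{1}(hK x) hr.
Qed.

Lemma E_aut_inv (h hinv : V -> V) : E_aut h -> cancel h hinv -> cancel hinv h -> E_aut hinv.
Proof.
move=> [hadd hlin _] hK hKV; split.
- move=> x y; apply: (can_inj hK); rewrite hKV.
  have := hadd (hinv x) (hinv y); rewrite !hKV => e; exact: (esym e).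
- move=> l x; apply: (can_inj hK); rewrite hKV.
  have := hlin l (hinv x); rewrite !hKV => e; exact: (esym e).
- by exists h.
Qed.

Lemma enorm_comp (gam : V -> option R) (h : V -> V) :
  E_aut h -> isENorm vE gam -> isENorm vE (gam \o h).
Proof.
move=> hE; have [hadd hlin [hinv hK hKV]] := hE.
have [hiadd hilin _] := E_aut_inv hE hK hKV.
have h0 : h 0 = 0.
  have hh := hadd 0 0; rewrite addr0 in hh; by apply: (addrI (h 0)); rewrite -hh addr0.
move=> [N1 N2 N3 [n [e [hc hsp]]]]; split.
- move=> x /=; rewrite N1; split=> [hx|->//]; by rewrite -(hK x) hx -h0 hK.
- by move=> x y r /= hx hy; rewrite hadd; apply: N2.
- by move=> l x nl /=; rewrite hlin; apply: N3.
exists n, (fun i => hinv (e i)).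
have hsum (c : 'I_n -> E) : h (\sum_(i < n) c i *: hinv (e i)) = \sum_(i < n) c i *: e i.
  rewrite (big_morph h hadd h0); apply: eq_bigr => i _; by rewrite hlin hKV.
split.
- move=> x; have [c [ec uc]] := hc (h x).
  exists c; split; first by apply: (can_inj hK); rewrite hsum.
  by move=> c' ec'; apply: uc; rewrite ec' hsum.
- move=> c r /=; rewrite hsum hsp.
  by split=> H i; have := H i; rewrite /= hKV.
Qed.
End Final.

Lemma residue_from_F (F : fieldType) (v : F -> Z) (E : fieldExtType F) (vE : E -> R)
  (hvE : extends_val v vE) (hF : nonarch_local_field v) :
  exists K (s : 'I_K -> E), [/\ (forall k, OE vE (s k)),
    (forall k k', ME vE (s k - s k') -> k = k'),
    (forall x, OE vE x -> exists k, ME vE (x - s k)) & (1 < K)%N].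
Proof.
case: hF => _ _ [sF [hr hx]].
have hsF1 : forall r, r \in sF -> OE vE (r%:A).
  move=> r /hr [->|h]; first by rewrite scale0r; left.
  have [->|nr] := eqVneq r 0; first by rewrite scale0r; left.
  by right; rewrite (vA hvE nr); exact: (IZR_le _ _ h).
have hsF2 : forall a : F, OE vE (a%:A) -> exists2 r, r \in sF & ME vE ((a - r)%:A).
  move=> a Oa.
  have ia : inO v a.
    have [->|na] := eqVneq a 0; first by left.
    right; case: Oa => [/eqP|h]; first by rewrite (negbTE (vA0 E na)).
    by apply: le_IZR; rewrite -(vA hvE na).
  have [r [rin hc]] := hx a ia; exists r => //.
  case: hc => [->|h1]; first by rewrite subrr scale0r; left.
  have [e0|nd] := eqVneq (a - r) 0; first by rewrite e0 scale0r; left.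
  by right; rewrite (vA hvE nd); apply: Rlt_le_trans Rlt_0_1 (IZR_le _ _ h1).
have [K [s [hs1 [hs2 hs3]]]] := residue_system hvE hsF1 hsF2.
exists K, s; split=> //.
have [k0 h0] := hs3 0 (OE0 vE).
have [k1 h1] := hs3 1 (OE1 hvE).
have nk : k0 != k1.
  apply/eqP => ek; apply: (not_ME1 hvE).
  move: (MEB hvE h1 h0); rewrite ek sub0r opprK addrNK; exact.
rewrite ltnNge; apply/negP => hK1; move/negP: nk; apply; apply/eqP; apply: val_inj.
have := ltn_ord k0; have := ltn_ord k1; move: hK1; rewrite /=; lia.
Qed.

Unset Implicit Arguments.
Local Close Scope ring_scope.

Theorem lemma1p2 (F : fieldType) (v : F -> Z) (hF : nonarch_local_field v)
  (E : fieldExtType F) (vE : E -> R) (hvE : extends_val v vE)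
  (V : vectType E) (alpha beta : V -> option R)
  (halpha : isENorm vE alpha) (hbeta : isENorm vE beta)
  (g : V -> V) (hg : F_aut g)
  (hconj : forall gamma : V -> option R,
      facetE vE beta gamma <-> facetE vE alpha (gamma \o g)) :
  exists h : V -> V, E_aut h /\
    forall gamma : V -> option R,
      facetE vE beta gamma <-> facetE vE alpha (gamma \o h).
Proof.
have [K [s [hs1 hs2 hs3 hK]]] := residue_from_F hvE hF.
have [hN' hL] : facetE vE alpha (beta \o g) by apply/hconj; split.
have [gadd _ [ginv gK gKV]] := hg.
have gsurj : forall y, exists x, y = g x by move=> y; exists (ginv y); rewrite gKV.
have [h [hE hnorm]] := key hvE hbeta hN' gadd gsurj (fun x => erefl) hs1 hs2 hs3 hK.
have [hadd hlin [hinv hK' hKV]] := hE.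
have hiE := E_aut_inv hE hK' hKV.
exists h; split=> // gam; split.
- move=> [hgam hLg]; split; first exact: enorm_comp.
  move=> L.
  apply: iff_trans (hL L) _.
  apply: iff_trans (@latt_ext _ _ _ (beta \o g) (beta \o h) L (fun x => esym (hnorm x))) _.
  apply: iff_trans (@latt_comp _ _ _ beta h hinv L hK' hKV) _.
  apply: iff_trans (hLg _) _.
  apply: iff_sym; exact: latt_comp.
- move=> [hgh hLgh]; split.
    have := enorm_comp hiE hgh.
    have -> : (gam \o h) \o hinv = gam by apply: functional_extensionality => y /=; rewrite hKV.
    done.
  move=> M.
  have eM : forall y, (fun y => (M \o h) (hinv y)) y <-> M y by move=> y /=; rewrite hKV.
  apply: iff_trans (iff_sym (@latt_Lext _ _ _ beta _ _ eM)) _.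
  apply: iff_trans (iff_sym (@latt_comp _ _ _ beta h hinv (M \o h) hK' hKV)) _.
  apply: iff_trans (@latt_ext _ _ _ (beta \o h) (beta \o g) (M \o h) (fun x => hnorm x)) _.
  apply: iff_trans (iff_sym (hL _)) _.
  apply: iff_trans (hLgh _) _.
  apply: iff_trans (@latt_comp _ _ _ gam h hinv (M \o h) hK' hKV) _.
  exact: latt_Lext.
Qed.
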